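(* Let $X$ satisfy (P1) and (P2), and let $\alpha$ be a saddle connection on $X$ which is neither a side nor a diagonal of a polygon, with polygonal decomposition $\alpha=\alpha_1\cup\dots\cup\alpha_k$. Then \[ \left\lceil \tfrac{k}{2}\right\rceil \le p_\alpha+q_\alpha, \] with equality if and only if $\alpha$ is odd.
   Context: $X$ is a translation surface obtained from finitely many Euclidean polygons by gluing pairs of parallel sides of equal length by translations, with (P1): each polygon convex with all angles obtuse or right; (P2): no two sides of the same polygon are identified. Saddle connection: straight segment between singularities (images of vertices) with none in its interior; a diagonal is a segment inside a polygon joining two non-adjacent vertices. Polygonal decomposition: cut $\alpha$ each time it passes from one polygon to another, giving consecutive segments $\alpha_1,\dots,\alpha_k$ ($k\ge2$ here), each in one polygon; $\alpha_1$ and $\alpha_k$ are non-adjacent. A segment in polygon $P$ is adjacent if it goes from the relative interior of a side $e$ of $P$ to the relative interior of a side adjacent to $e$; otherwise non-adjacent. $p_\alpha$ = number of non-adjacent segments; $q_\alpha=\sum\lfloor r/2\rfloor$ over maximal runs of consecutive adjacent segments of size $r$. $\alpha$ is odd if no two non-adjacent segments are consecutive and between any two consecutive non-adjacent segments there is an odd number of adjacent segments. *)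

(* Defs.v *)
From HB Require Import structures.
From mathcomp Require Import all_boot all_order all_algebra.
Set Implicit Arguments. Unset Strict Implicit. Unset Printing Implicit Defensive.
Import Order.TTheory GRing.Theory Num.Theory.
Local Open Scope ring_scope.

Section TranslationSurfaces.
Variable R : realFieldType.

Definition pt := (R * R)%type.
Definition vsub (u v : pt) : pt := (u.1 - v.1, u.2 - v.2).
Definition vadd (u v : pt) : pt := (u.1 + v.1, u.2 + v.2).
Definition vscale (t : R) (u : pt) : pt := (t * u.1, t * u.2).
Definition cross (u v : pt) : R := u.1 * v.2 - u.2 * v.1.
Definition dot (u v : pt) : R := u.1 * v.1 + u.2 * v.2.

(* A polygon is the list of its vertices, in counterclockwise order;
   vertices and sides are indexed cyclically. Side i goes from vertex i
   to vertex i+1. *)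
Definition polygon := seq pt.
Definition vtx (P : polygon) (i : nat) : pt := nth (0, 0) P (i %% size P).
Definition side_vec (P : polygon) (i : nat) : pt := vsub (vtx P i.+1) (vtx P i).

Definition convex_polygon (P : polygon) : Prop :=
  (3 <= size P)%N /\
  forall i j, (i < size P)%N -> (j < size P)%N -> j != i -> j != (i.+1 %% size P)%N ->
    0 < cross (side_vec P i) (vsub (vtx P j) (vtx P i)).

Definition angles_obtuse_or_right (P : polygon) : Prop :=
  forall i, (i < size P)%N ->
    dot (vsub (vtx P i) (vtx P i.+1)) (vsub (vtx P i.+2) (vtx P i.+1)) <= 0.

Definition in_interior (P : polygon) (x : pt) : Prop :=
  forall i, (i < size P)%N -> 0 < cross (side_vec P i) (vsub x (vtx P i)).

Definition on_side_relint (P : polygon) (i : nat) (x : pt) : bool :=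
  (cross (side_vec P i) (vsub x (vtx P i)) == 0) &&
  (0 < dot (side_vec P i) (vsub x (vtx P i)) < dot (side_vec P i) (side_vec P i)).

Definition is_vertex (P : polygon) (x : pt) : Prop :=
  exists2 i, (i < size P)%N & x = vtx P i.

(* A side of the surface is a pair (polygon index, side index). *)
Definition valid_side (polys : seq polygon) (s : nat * nat) : Prop :=
  (s.1 < size polys)%N /\ (s.2 < size (nth [::] polys s.1))%N.

Definition sideP (polys : seq polygon) (s : nat * nat) : polygon := nth [::] polys s.1.

(* Translation surface given by finitely many polygons and a pairing
   [glue] of their sides: paired sides are parallel, of equal length and
   are identified by a translation (for counterclockwise polygons this
   means the side vectors are opposite). *)
Definition translation_surface (polys : seq polygon) (glue : nat * nat -> nat * nat) : Prop :=
  (0 < size polys)%N /\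
  (forall P, P \in polys -> (3 <= size P)%N) /\
  forall s, valid_side polys s ->
    [/\ valid_side polys (glue s), glue (glue s) = s, glue s <> s &
        side_vec (sideP polys (glue s)) (glue s).2 =
        vscale (-1) (side_vec (sideP polys s) s.2)].

Definition P1 (polys : seq polygon) : Prop :=
  forall P, P \in polys -> convex_polygon P /\ angles_obtuse_or_right P.

Definition P2 (polys : seq polygon) (glue : nat * nat -> nat * nat) : Prop :=
  forall s, valid_side polys s -> (glue s).1 <> s.1.

(* A segment of the polygonal decomposition: a polygon index and the
   initial and final points (in the coordinates of that polygon). *)
Record segment := Segment { seg_poly : nat; seg_start : pt; seg_end : pt }.

Definition seg0 : segment := Segment 0 (0, 0) (0, 0).

Definition segP (polys : seq polygon) (g : segment) : polygon := nth [::] polys (seg_poly g).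

(* [segs] is the polygonal decomposition alpha_1, ..., alpha_k of a saddle
   connection alpha (which is not a side of a polygon): a straight
   trajectory (all pieces have the same direction) that starts and ends
   at vertices, whose pieces have their interiors inside the polygons,
   and which passes from one polygon to the next through the relative
   interior of a side, following the gluing translation. *)
Definition saddle_connection_decomp (polys : seq polygon)
    (glue : nat * nat -> nat * nat) (segs : seq segment) : Prop :=
  [/\ (0 < size segs)%N,
      (forall g, (exists2 i, (i < size segs)%N & g = nth seg0 segs i) -> (seg_poly g < size polys)%N),
      (exists2 d : pt, d != (0, 0) & forall g, (exists2 i, (i < size segs)%N & g = nth seg0 segs i) ->
          exists2 t : R, 0 < t & vsub (seg_end g) (seg_start g) = vscale t d),
      (forall g, (exists2 i, (i < size segs)%N & g = nth seg0 segs i) -> forall t : R, 0 < t < 1 ->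
          in_interior (segP polys g) (vadd (seg_start g) (vscale t (vsub (seg_end g) (seg_start g))))) &
   [/\ is_vertex (segP polys (head seg0 segs)) (seg_start (head seg0 segs)),
      is_vertex (segP polys (last seg0 segs)) (seg_end (last seg0 segs)) &
      forall i, (i.+1 < size segs)%N ->
        let g := nth seg0 segs i in
        let g' := nth seg0 segs i.+1 in
        exists2 e, (e < size (segP polys g))%N &
          [/\ on_side_relint (segP polys g) e (seg_end g),
              seg_poly g' = (glue (seg_poly g, e)).1 &
              seg_start g' =
                vadd (vsub (seg_end g) (vtx (segP polys g) e))
                     (vtx (sideP polys (glue (seg_poly g, e))) (glue (seg_poly g, e)).2.+1)]]].

Definition adjacent_seg (polys : seq polygon) (g : segment) : bool :=
  let P := segP polys g in
  let n := size P in
  has (fun e => has (fun e' =>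
        [&& on_side_relint P e (seg_start g), on_side_relint P e' (seg_end g) &
            (e' == (e.+1 %% n)%N) || (e == (e'.+1 %% n)%N)]) (iota 0 n)) (iota 0 n).

Fixpoint runs_aux (r : nat) (s : seq bool) : seq nat :=
  match s with
  | [::] => if r is 0 then [::] else [:: r]
  | true :: s' => runs_aux r.+1 s'
  | false :: s' => (if r is 0 then [::] else [:: r]) ++ runs_aux 0 s'
  end.
Definition true_runs (s : seq bool) : seq nat := runs_aux 0 s.

Definition adj_pattern (polys : seq polygon) (segs : seq segment) : seq bool :=
  map (adjacent_seg polys) segs.

Definition p_alpha (polys : seq polygon) (segs : seq segment) : nat :=
  count (fun g => ~~ adjacent_seg polys g) segs.

Definition q_alpha (polys : seq polygon) (segs : seq segment) : nat :=
  sumn (map half (true_runs (adj_pattern polys segs))).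

Definition odd_pattern (b : seq bool) : Prop :=
  forall i j, (i < j)%N -> (j < size b)%N ->
    ~~ nth false b i -> ~~ nth false b j ->
    (forall l, (i < l)%N -> (l < j)%N -> nth false b l) ->
    odd (j - i).-1.

Definition odd_sc (polys : seq polygon) (segs : seq segment) : Prop :=
  odd_pattern (adj_pattern polys segs).

End TranslationSurfaces.

(* Main.v *)
Require Import Defs.
From mathcomp Require Import all_boot all_order all_algebra.
From mathcomp Require Import zify.
Set Implicit Arguments. Unset Strict Implicit.

Fixpoint nodd (r : nat) (s : seq bool) : nat :=
  match s with [::] => 0 | true :: s' => nodd r.+1 s' | false :: s' => odd r + nodd 0 s' end.
Fixpoint oddg (r : nat) (s : seq bool) : bool :=
  match s with [::] => true | true :: s' => oddg r.+1 s' | false :: s' => odd r && oddg 0 s' end.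

Lemma nseq_true_cons r s : nseq r true ++ true :: s = nseq r.+1 true ++ s.
Proof. by elim: r => //= r ->. Qed.

Lemma runs_eq s r : last true (nseq r true ++ s) = false ->
  2 * (count negb s + sumn (map half (runs_aux r s))) + nodd r s = count negb s + r + size s.
Proof.
elim: s r => [|x s IH] r H.
  suff: last true (nseq r true) = true by rewrite cats0 in H; rewrite H.
  by clear H; elim: r.
case: x H => H /=.
  rewrite IH; last by rewrite -nseq_true_cons.
  lia.
rewrite map_cat sumn_cat.
have E : sumn (map half (if r is 0 then [::] else [:: r])) = half r by clear H; case: r => //= r; rewrite addn0.
rewrite E.
have := odd_double_half r; rewrite -muln2 => Hr.
have HI : last true (nseq 0 true ++ s) = false -> 2 * (count negb s + sumn (map half (runs_aux 0 s))) + nodd 0 s = count negb s + 0 + size s := IH 0.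
have [->|Hs] : s = [::] \/ last true s = false.
  by case: s {IH HI} H => [|y s] H; [left | right; move: H; rewrite last_cat].
  rewrite /=. lia.
have := HI Hs. lia.
Qed.

Lemma nodd_le s r : nodd r s <= count negb s.
Proof.
elim: s r => [|x s IH] r //=; case: x => /=; first exact: IH.
have := IH 0; case: odd => /=; lia.
Qed.

Lemma oddg_nodd s r : oddg r s = (nodd r s == count negb s).
Proof.
elim: s r => [|x s IH] r //=; case: x => /=; first exact: IH.
rewrite IH; have := nodd_le s 0; case: odd => /= h.
  by rewrite add1n eqSS.
by case: eqP => //; lia.
Qed.

Definition Fg (r : nat) (s : seq bool) : Prop :=
  forall j, j < size s -> ~~ nth false s j -> (forall l, l < j -> nth false s l) -> odd (r + j).

Lemma OP_cons x s : odd_pattern (x :: s) <-> ((~~ x) -> Fg 0 s) /\ odd_pattern s.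
Proof.
split.
  move=> H; split.
    move=> nx j hj nsj hl.
    have := H 0 j.+1 erefl hj nx nsj.
    rewrite subn0 /= add0n; apply.
    case=> [//|l] _ hl'; apply: hl; lia.
  move=> i j hij hj ni nj hl.
  have := H i.+1 j.+1 hij hj ni nj.
  rewrite subSS; apply.
  case=> [//|l] h1 h2; apply: hl; lia.
move=> [H1 H2] i j hij hj ni nj hl.
case: i hij ni hl => [|i] hij ni hl.
  case: j hij hj nj hl => [//|j] _ hj nj hl.
  rewrite subn0 /=.
  have := H1 ni j hj nj; rewrite add0n; apply.
  move=> l hl'; apply: (hl l.+1) => //.
case: j hij hj nj hl => [//|j] hij hj nj hl.
rewrite subSS; apply: (H2 i j) => //.
move=> l h1 h2; apply: (hl l.+1) => //.
Qed.

Lemma Fg_true r s : Fg r (true :: s) <-> Fg r.+1 s.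
Proof.
split.
  move=> H j hj nj hl; rewrite addSnnS; apply: (H j.+1) => //.
  by case=> [//|l] h; apply: hl.
move=> H [//|j] hj nj hl; rewrite addnS -addSn; apply: H => // l h.
exact: (hl l.+1).
Qed.

Lemma Fg_false r s : Fg r (false :: s) <-> odd r.
Proof.
split.
  by move=> H; have := H 0 erefl erefl (fun l (h : l < 0) => False_ind _ (notF h)); rewrite addn0.
move=> H [|j] hj nj hl; first by rewrite addn0.
by have := hl 0 erefl.
Qed.

Lemma oddgP s r : oddg r s <-> Fg r s /\ odd_pattern s.
Proof.
elim: s r => [|x s IH] r.
  split=> [_|//]; split; first by move=> j.
  by move=> i j _.
case: x => /=.
  rewrite IH OP_cons Fg_true; split; first by move=> [h1 h2]; split.
  by move=> [h1 [_ h2]].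
rewrite OP_cons Fg_false; split.
  by move=> /andP [h1 /IH [h2 h3]]; split => //; split.
by move=> [h1 [h2 h3]]; rewrite h1 /=; apply/IH; split => //; apply: h2.
Qed.
From mathcomp Require Import zify.
Set Implicit Arguments. Unset Strict Implicit.
Import Order.TTheory GRing.Theory Num.Theory.

Lemma vtx_not_relint (R : realFieldType) (P : polygon R) i e :
  convex_polygon P -> (i < size P)%N -> (e < size P)%N -> on_side_relint P e (vtx P i) = false.
Proof.
move=> [h3 hc] hi he; rewrite /on_side_relint.
case: (eqVneq i e) => [->|ne].
  by rewrite /dot /vsub !subrr !mulr0 addr0 ltxx andbF.
case: (eqVneq i (e.+1 %% size P)%N) => [->|ne2].
  have -> : vtx P (e.+1 %% size P) = vtx P e.+1 by rewrite /vtx modn_mod.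
  change (vsub (vtx P e.+1) (vtx P e)) with (side_vec P e).
  by rewrite ltxx !andbF.
by have := hc e i he hi ne ne2; move=> /gt_eqF ->.
Qed.

Lemma not_adj_start (R : realFieldType) (polys : seq (polygon R)) g :
  P1 polys -> (seg_poly g < size polys)%N ->
  is_vertex (segP polys g) (seg_start g) -> adjacent_seg polys g = false.
Proof.
move=> hP hg [i hi hv]; apply/negbTE/hasP => [[e he /hasP [e' he' /and3P [h1 _ _]]]].
have [hc _] := hP _ (mem_nth [::] hg).
move: he; rewrite mem_iota add0n => /andP [_ he].
by rewrite hv vtx_not_relint in h1.
Qed.

Lemma not_adj_end (R : realFieldType) (polys : seq (polygon R)) g :
  P1 polys -> (seg_poly g < size polys)%N ->
  is_vertex (segP polys g) (seg_end g) -> adjacent_seg polys g = false.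
Proof.
move=> hP hg [i hi hv]; apply/negbTE/hasP => [[e he /hasP [e' he' /and3P [_ h1 _]]]].
have [hc _] := hP _ (mem_nth [::] hg).
move: he'; rewrite mem_iota add0n => /andP [_ he''].
by rewrite hv vtx_not_relint in h1.
Qed.

Theorem mainTheorem7 (R : realFieldType) (polys : seq (polygon R))
    (glue : nat * nat -> nat * nat) (segs : seq (segment R)) :
  translation_surface polys glue -> P1 polys -> P2 polys glue ->
  saddle_connection_decomp polys glue segs ->
  (* alpha is not a diagonal (nor a side): k >= 2 *)
  (2 <= size segs)%N ->
  (uphalf (size segs) <= p_alpha polys segs + q_alpha polys segs)%N /\
  (uphalf (size segs) = p_alpha polys segs + q_alpha polys segs <-> odd_sc polys segs).
Proof.
move=> _ hP _ [_ hpoly _ _ [hst hen _]] hk.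
have Hp : p_alpha polys segs = count negb (adj_pattern polys segs)
  by rewrite /p_alpha /adj_pattern count_map.
have Hq : q_alpha polys segs = sumn (map half (true_runs (adj_pattern polys segs))) by [].
have Hk : size segs = size (adj_pattern polys segs) by rewrite size_map.
have [s [Eb Hs]] : exists s, adj_pattern polys segs = false :: s /\ last true s = false.
  case: segs hpoly hst hen hk {Hp Hq Hk} => [|g0 [|g1 rest]] // hpoly hst hen _.
  exists (map (adjacent_seg polys) (g1 :: rest)); split.
    rewrite /adj_pattern map_cons (not_adj_start hP) //.
    by apply: hpoly; exists 0%N.
  rewrite /= last_map (not_adj_end hP) //.
  apply: hpoly; exists (size rest).+1 => //.
  by have := nth_last (seg0 R) (g1 :: rest); rewrite /= => ->.
rewrite /odd_sc Hp Hq Hk Eb.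
have -> : true_runs (false :: s) = runs_aux 0 s by [].
have -> : count negb (false :: s) = (count negb s).+1 by [].
have -> : size (false :: s) = (size s).+1 by [].
have -> : odd_pattern (false :: s) <-> (nodd 0 s == count negb s).
  rewrite OP_cons -oddg_nodd; split.
    by move=> [h1 h2]; apply/oddgP; split => //; exact: h1.
  by move=> /oddgP [h1 h2]; split.
have E := @runs_eq s 0 Hs.
have L := nodd_le s 0.
rewrite uphalf_half.
have := odd_double_half (size s).+1; rewrite -muln2 => Hd.
split; first lia.
split => H.
  apply/eqP; lia.
move/eqP: H => H; lia.
Qed.
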